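(* Let $1\le p<\infty$ and let $\boldsymbol{w(k)}=(w_n(k))_{n\in\mathbb{N}}$, $k\in\mathbb{N}$, be countably many weights such that each $B_{\boldsymbol{w(k)}}$ is a continuous frequently hypercyclic operator on the complex Banach space $\ell_p$. Assume that $\bigcap_{k\ge1}FHC(B_{\boldsymbol{w(k)}})\neq\emptyset$. Then for all $i,j\ge1$ with $i\ne j$ and for every $0<\varepsilon<1$, there exist increasing sequences $(m_{i,j,l})_{l\in\mathbb{N}}$, $(n_{i,j,l})_{l\in\mathbb{N}}$ of positive integers tending to infinity, with $\liminf_{l\to\infty}n_{i,j,l}/m_{i,j,l}>0$ and $\limsup_{l\to\infty}n_{i,j,l}/m_{i,j,l}<\varepsilon$, such that \[ \sum_{l\ge1}\frac{|W_{m_{i,j,l}}(i)|^p}{|W_{m_{i,j,l}}(j)|^p\,|W_{m_{i,j,l}-n_{i,j,l}}(i)|^p}<\infty . \]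
   Context: $\ell_p$ is the space of complex sequences $(x_n)_{n\ge0}$ with finite $\|x\|_p$, unit vectors $(e_n)_{n\ge0}$. A weight is a bounded sequence of nonzero complex numbers; $B_{\boldsymbol w}e_0=0$, $B_{\boldsymbol w}e_n=w_ne_{n-1}$. $W_n(k)=w_1(k)\cdots w_n(k)$, $W_0(k)=1$. $FHC(T)$ is the set of vectors $x$ such that for every nonempty open $U$, $\{n:T^nx\in U\}$ has positive lower density; $T$ is frequently hypercyclic if $FHC(T)\ne\emptyset$. *)

(* Defs.v *)
From mathcomp Require Import all_boot all_order all_algebra.
From mathcomp Require Import all_classical all_reals all_analysis.
From mathcomp Require Import complex.
Import Order.TTheory GRing.Theory Num.Theory.
Import numFieldNormedType.Exports.
Local Open Scope ring_scope.
Local Open Scope classical_set_scope.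

Section LpDefs.
Context {R : realType}.

Definition cmod (z : R[i]) : R := ComplexField.Normc.normc z.

Definition lp (p : R) : set (nat -> R[i]) :=
  [set x | cvgn (series (fun n => cmod (x n) `^ p : R) : R^nat)].

Definition lp_norm (p : R) (x : nat -> R[i]) : R :=
  (limn (series (fun n => cmod (x n) `^ p : R) : R^nat)) `^ p^-1.

Definition lp_open (p : R) (U : set (nat -> R[i])) : Prop :=
  U `<=` lp p /\
  forall y, U y -> exists2 r : R, 0 < r &
    forall z, lp p z -> lp_norm p (fun n => z n - y n) < r -> U z.

(* a weight: bounded sequence of nonzero complex numbers (indices n >= 1
   are the ones used by the shift) *)
Definition weight (w : nat -> R[i]) : Prop :=
  (forall n, (1 <= n)%N -> w n != 0) /\
  exists M : R, forall n, cmod (w n) <= M.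

(* weighted backward shift: B e_0 = 0, B e_n = w_n e_{n-1},
   i.e. (B x)_n = w_{n+1} x_{n+1} *)
Definition bshift (w : nat -> R[i]) (x : nat -> R[i]) : nat -> R[i] :=
  fun n => w n.+1 * x n.+1.

Definition Wprod (w : nat -> R[i]) (n : nat) : R[i] :=
  \prod_(1 <= k < n.+1) w k.

Definition lower_density (A : set nat) : \bar R :=
  limn_einf (fun N : nat =>
    ((#|[set n : 'I_N | `[< A (nat_of_ord n) >]]|)%:R / N%:R : R)%:E).

Definition FHC (p : R) (T : (nat -> R[i]) -> (nat -> R[i])) :
    set (nat -> R[i]) :=
  [set x | lp p x /\
     forall U, lp_open p U -> U !=set0 ->
       (0 < lower_density [set n | U (iter n T x)])%E].

Definition lp_continuous (p : R) (T : (nat -> R[i]) -> (nat -> R[i])) :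
    Prop :=
  (forall x, lp p x -> lp p (T x)) /\
  forall x, lp p x -> forall e : R, 0 < e -> exists2 d : R, 0 < d &
    forall y, lp p y -> lp_norm p (fun n => y n - x n) < d ->
      lp_norm p (fun n => T y n - T x n) < e.

End LpDefs.

(* Main.v *)
Require Import Defs.
From mathcomp Require Import all_boot all_order all_algebra.
From mathcomp Require Import all_classical all_reals all_analysis.
From mathcomp Require Import complex.
From mathcomp Require Import ring lra.
Import Order.TTheory GRing.Theory Num.Theory.
Import numFieldNormedType.Exports.
Local Open Scope ring_scope.
Local Open Scope classical_set_scope.

Section Helpers.
Context {R : realType}.
Implicit Types (z y : R[i]).

Lemma cmod_ge0 z : 0 <= cmod z.
Proof. by case: z => a b; rewrite /cmod /=; exact: sqrtr_ge0. Qed.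

Lemma cmodM z y : cmod (z * y) = cmod z * cmod y.
Proof. exact: ComplexField.Normc.normcM. Qed.

Lemma cmodD z y : cmod (z + y) <= cmod z + cmod y.
Proof. exact: le_normcD. Qed.

Lemma cmodN z : cmod (- z) = cmod z.
Proof. exact: normcN. Qed.

Lemma cmod0 : cmod (0 : R[i]) = 0.
Proof. exact: ComplexField.Normc.normc0. Qed.

Lemma cmod1 : cmod (1 : R[i]) = 1.
Proof. exact: ComplexField.Normc.normc1. Qed.

Lemma cmod_eq0 z : cmod z = 0 -> z = 0.
Proof. exact: ComplexField.Normc.eq0_normc. Qed.

Lemma cmodV z : cmod z^-1 = (cmod z)^-1.
Proof. exact: ComplexField.Normc.normcV. Qed.

Lemma cmodB z y : cmod (z - y) <= cmod (z - 1) + cmod (1 - y).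
Proof. by have := cmodD (z - 1) (1 - y); rewrite addrA subrK. Qed.

Lemma cmod_tri z y x : cmod (z - y) <= cmod (z - x) + cmod (x - y).
Proof. by have := cmodD (z - x) (x - y); rewrite addrA subrK. Qed.

Lemma cmod_subC z y : cmod (z - y) = cmod (y - z).
Proof. by rewrite -cmodN opprB. Qed.

Lemma iter_bshift (w x : nat -> R[i]) n k :
  iter n (bshift w) x k = (\prod_(k.+1 <= t < (n + k)%N.+1) w t) * x (n + k)%N.
Proof.
elim: n k => [|n IH] k /=; first by rewrite big_geq ?mul1r.
rewrite /bshift IH addnS -addSn mulrA; congr (_ * _).
by rewrite [in RHS]big_ltn // ltnS addSn ltnS leq_addl.

Qed.

Lemma Wprod_split (w : nat -> R[i]) m n : (n <= m)%N ->
  Wprod w m = Wprod w (m - n)%N * \prod_((m - n)%N.+1 <= t < (n + (m - n))%N.+1) w t.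
Proof.
move=> nm; rewrite /Wprod subnKC //.
rewrite -big_cat_nat //; rewrite ltnS leq_subr //.
Qed.


Lemma geo_cvg (u : R^nat) (C : R) : (forall n, 0 <= u n) ->
  (forall n, u n <= C * (2^-1) ^+ n) -> cvgn (series u).
Proof.
move=> u0 uC; apply: (@series_le_cvg R u (geometric C 2^-1)) => //.
- by move=> n; apply: le_trans (uC n).
- apply/cvg_ex; eexists; apply: cvg_geometric_series.
  by rewrite ger0_norm // invf_lt1 // ltr1n.
Qed.

Variable p : R.
Hypothesis hp : 1 <= p.

Lemma p_gt0 : 0 < p.
Proof. by apply: lt_le_trans hp. Qed.

Lemma lp0 : lp p (fun=> 0).
Proof.
by apply: (@geo_cvg _ 0) => n; rewrite cmod0 powR0 ?gt_eqF ?p_gt0 ?mul0r.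
Qed.

Definition e0 : nat -> R[i] := fun n => if n == 0%N then 1 else 0.

Lemma lpe0 : lp p e0.
Proof.
apply: (@geo_cvg _ 1) => n; first exact: powR_ge0.
case: n => [|n].
  by rewrite (_ : e0 0 = 1) // cmod1 powR1 expr0 mulr1.
rewrite (_ : e0 n.+1 = 0) // cmod0 powR0 ?gt_eqF ?p_gt0 // mul1r; exact: exprn_ge0.
Qed.

Lemma powR_le (a b : R) : 0 <= a -> a <= b -> a `^ p <= b `^ p.
Proof.
move=> a0 ab; apply: (ge0_ler_powR (ltW p_gt0)) => //; rewrite nnegrE //.
exact: le_trans ab.
Qed.

Lemma lp_sub (z y : nat -> R[i]) : lp p z -> lp p y -> lp p (fun n => z n - y n).
Proof.
move=> hz hy.
have hs : cvgn (series ((2 `^ p) *: ((fun n => cmod (z n) `^ p) + (fun n => cmod (y n) `^ p)))).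
  by apply: is_cvg_seriesZ; apply: is_cvg_seriesD.
apply: (series_le_cvg _ _ _ hs).
- move=> n; exact: powR_ge0.
- move=> n; rewrite /GRing.scale /=.
  by apply: mulr_ge0; [exact: powR_ge0|apply: addr_ge0; exact: powR_ge0].
move=> n; rewrite /GRing.scale /=.
set a := cmod (z n); set b := cmod (y n).
have a0 : 0 <= a by exact: cmod_ge0.
have b0 : 0 <= b by exact: cmod_ge0.
have h1 : cmod (z n - y n) <= 2 * Num.max a b.
  apply: le_trans (cmodD _ _) _; rewrite cmodN mulr2n mulrDl mul1r.
  by apply: lerD; rewrite ?le_max lexx ?orbT.
change (cmod (z n - y n) `^ p <= 2 `^ p * (a `^ p + b `^ p)).
apply: le_trans (powR_le _ _ (cmod_ge0 _) h1) _.
rewrite powRM // ?le_max ?a0 //; apply: ler_wpM2l; first exact: powR_ge0.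
by case: (leP a b) => _; rewrite ?lerDl ?lerDr powR_ge0.
Qed.

Lemma coord_le_norm (v : nat -> R[i]) k : lp p v -> cmod (v k) <= lp_norm p v.
Proof.
move=> hv; rewrite /lp_norm.
have nd : nondecreasing_seq (series (fun n => cmod (v n) `^ p)).
  by apply: nondecreasing_series => n _ _; exact: powR_ge0.
have h1 : cmod (v k) `^ p <= limn (series (fun n => cmod (v n) `^ p)).
  apply: le_trans (nondecreasing_cvgn_le nd hv k.+1).
  rewrite seriesSr lerDr; apply: sumr_ge0 => i _; exact: powR_ge0.
have -> : cmod (v k) = (cmod (v k) `^ p) `^ p^-1.
  by rewrite -powRrM mulfV ?gt_eqF ?p_gt0 // powRr1 // cmod_ge0.
apply: (ge0_ler_powR _) => //; rewrite ?nnegrE ?invr_ge0 ?(ltW p_gt0) ?powR_ge0 //.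
exact: le_trans (powR_ge0 _ _) h1.
Qed.


Definition UA : set (nat -> R[i]) := [set y | lp p y /\ cmod (y 0%N - 1) < 2^-1].
Definition Ud (d : R) : set (nat -> R[i]) :=
  [set y | lp p y /\ exists2 s, s < d & forall k, cmod (y k) <= s].

Lemma open_UA : lp_open p UA.
Proof.
split; first by move=> y [].
move=> y [ly hy]; exists (2^-1 - cmod (y 0%N - 1)); first by rewrite subr_gt0.
move=> z lz hn; split => //.
apply: le_lt_trans (cmod_tri _ _ (y 0%N)) _.
have := coord_le_norm _ 0 (lp_sub _ _ lz ly) => /= h.
by rewrite -ltrBrDr; apply: le_lt_trans hn.
Qed.

Lemma open_Ud d : lp_open p (Ud d).
Proof.
split; first by move=> y [].
move=> y [ly [s sd hs]]; exists (d - s); first by rewrite subr_gt0.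
move=> z lz hn; split => //; exists (s + lp_norm p (fun n => z n - y n)).
  by rewrite -ltrBrDl.
move=> k; have := coord_le_norm _ k (lp_sub _ _ lz ly) => /= h.
rewrite addrC; apply: le_trans (lerD h (hs k)).
by have := cmodD (z k - y k) (y k); rewrite subrK.
Qed.

Lemma UA_ne : UA e0.
Proof.
split; first exact: lpe0.
by rewrite (_ : e0 0 = 1) // subrr cmod0 invr_gt0 ltr0n.
Qed.

Lemma Ud_ne d : 0 < d -> Ud d (fun=> 0).
Proof.
move=> d0; split; first exact: lp0.
by exists 0 => // k; rewrite cmod0.
Qed.

End Helpers.

Lemma card_sum (A : set nat) N :
  #|[set n : 'I_N | `[< A (nat_of_ord n) >]]| = (\sum_(0 <= n < N) `[< A n >])%N.
Proof.
rewrite -sum1_card big_mkcond /= big_mkord.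
by apply: eq_bigr => i _; rewrite /in_set unfold_in /= asboolb; case: ifP.
Qed.

Lemma density_gap (R : realType) (A : set nat) :
  (0 < @lower_density R A)%E ->
  exists K N0 : nat, forall N, (N0 <= N)%N -> exists2 a, A a & (N <= a < K * N)%N.
Proof.
rewrite /lower_density.
set u := (fun N : nat => _).
rewrite limn_einf_lim (cvg_lim _ (@cvg_einfs_sup R u)) // => /ereal_sup_gt [_ [N0 _ <-]] pos.
have lb : forall N, (N0 <= N)%N -> (einfs u N0 <= u N)%E.
  by move=> N hN; apply: ereal_inf_lbound; exists N.
have : (einfs u N0 <= u N0)%E by exact: lb.
move: pos lb; case: (einfs u N0) => [d| |] //= d0 lb _.
set K := (Num.trunc d^-1).+1.
have dK : 1 < d * K%:R.
  rewrite -ltr_pdivrMl // mulr1; rewrite -truncn_lt_nat //.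
  by rewrite invr_ge0 ltW.
exists K, (maxn N0 1) => N; rewrite geq_max => /andP [hN0 hN1].
apply: contrapT => nA.
have cKN : (\sum_(0 <= n < K * N) `[< A n >] = \sum_(0 <= n < N) `[< A n >])%N.
  rewrite (@big_cat_nat _ _ _ N) //=; last by rewrite leq_pmull.
  rewrite [X in (_ + X)%N]big1_seq ?addn0 // => n /andP [_].
  rewrite mem_index_iota => hn.
  case: asboolP => // An; exfalso; apply: nA; by exists n.
have cN : (\sum_(0 <= n < N) `[< A n >] <= N)%N.
  rewrite -[X in (_ <= X)%N](subn0 N) -[X in (_ <= X)%N]muln1 -sum_nat_const_nat.
  by apply: leq_sum => i _; exact: leq_b1.
have := lb (K * N)%N; rewrite /u card_sum cKN lee_fin.
have KN0 : (0 < K * N)%N by rewrite muln_gt0.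
rewrite ler_pdivlMr ?ltr0n // => /(_ _) h.
have {h} h : d * (K * N)%:R <= N%:R.
  apply: le_trans (h _) _; first by apply: leq_trans hN0 _; rewrite leq_pmull.
  by rewrite ler_nat.
move: h; rewrite natrM mulrA; apply/negP; rewrite -ltNge.
by rewrite -[X in X < _]mul1r ltr_pM2r // ltr0n.
Qed.

Lemma einf_ge (R : realType) (u : (\bar R)^nat) a : (forall n, (a <= u n)%E) -> (a <= limn_einf u)%E.
Proof.
move=> h; rewrite limn_einf_lim; apply: lime_ge; first exact: is_cvg_einfs.
by apply: nearW => n; apply: le_ereal_inf_tmp => _ [k _ <-].
Qed.

Lemma esup_le (R : realType) (u : (\bar R)^nat) a : (forall n, (u n <= a)%E) -> (limn_esup u <= a)%E.
Proof.
move=> h; rewrite limn_esup_lim; apply: lime_le; first exact: is_cvg_esups.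
by apply: nearW => n; apply: ge_ereal_sup => _ [k _ <-].
Qed.

Fixpoint srec (h : nat -> nat -> nat) (G : nat -> nat) (b0 l : nat) : nat :=
  match l with 0 => h 0%N b0 | l'.+1 => h l'.+1 (G (srec h G b0 l')) end.

Lemma term_bound (R : realType) (p : R) (hp : 1 <= p) (wi wj x : nat -> R[i]) (m n : nat) (dl : R) :
  (n <= m)%N -> Ud p dl (iter n (bshift wi) x) -> UA p (iter m (bshift wj) x) ->
  cmod (Wprod wi m) `^ p / (cmod (Wprod wj m) `^ p * cmod (Wprod wi (m - n)%N) `^ p)
    <= 2 `^ p * dl `^ p.
Proof.
move=> nm [_ [s sd hs]] [_ hA].
have hs' := hs (m - n)%N; rewrite iter_bshift in hs'.
rewrite (Wprod_split wi _ _ nm).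
set P := \prod_(_ <= t < _) wi t in hs' *.
rewrite subnKC // in hs'.
have hA' : cmod (Wprod wj m * x m - 1) < 2^-1 by move: hA; rewrite iter_bshift addn0.
rewrite cmodM in hs'; rewrite cmodM.
set a := cmod (Wprod wi (m - n)%N) in hs' *.
set b := cmod (Wprod wj m).
set cp := cmod P in hs' *.
set X := cmod (x m) in hs'.
have b0' : 0 <= b by exact: cmod_ge0.
have X0 : 0 <= X by exact: cmod_ge0.
have cp0 : 0 <= cp by exact: cmod_ge0.
have a0' : 0 <= a by exact: cmod_ge0.
have hb : 1 < 2 * (b * X).
  have := cmodD (Wprod wj m * x m) (1 - Wprod wj m * x m).
  rewrite addrC subrK cmod1 cmod_subC cmodM -/b -/X => h.
  have i2 : (2 : R)^-1 = 1 / 2 by rewrite div1r.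
  rewrite i2 in hA'; lra.
have b0 : 0 < b.
  rewrite lt_neqAle b0' andbT; apply/eqP => e; rewrite -e mul0r in hb; lra.
have dl0 : 0 <= dl by apply: le_trans (ltW sd); apply: le_trans hs'; exact: mulr_ge0.
have hcp : cp <= 2 * dl * b.
  have h1 : cp <= cp * (2 * (b * X)) by rewrite ler_peMr // ltW.
  apply: le_trans h1 _; rewrite (_ : cp * (2 * (b * X)) = 2 * b * (cp * X)); last by ring.
  rewrite (_ : 2 * dl * b = 2 * b * dl); last by ring.
  apply: ler_wpM2l; first by apply: mulr_ge0 => //; lra.
  by apply: le_trans hs' (ltW sd).
have p0 : 0 < p by apply: lt_le_trans hp.
have [a0|a0] : a = 0 \/ 0 < a.
  by move: a0'; rewrite le_eqVlt => /orP [/eqP <-|->]; [left|right].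
  rewrite a0 powR0 ?gt_eqF // mulr0 invr0 mulr0.
  by apply: mulr_ge0; exact: powR_ge0.
rewrite powRM // (_ : a `^ p * cp `^ p / (b `^ p * a `^ p) = cp `^ p / b `^ p); last first.
  field; rewrite !gt_eqF ?powR_gt0 //.
rewrite ler_pdivrMr ?powR_gt0 // -!powRM //; last by apply: mulr_ge0 => //; lra.
  exact: (@powR_le R p hp _ _ cp0 hcp).
Qed.

Theorem theorem4p10 (R : realType) (p : R) (w : nat -> nat -> R[i]) :
  1 <= p ->
  (forall k, (1 <= k)%N -> weight (w k)) ->
  (forall k, (1 <= k)%N -> lp_continuous p (bshift (w k))) ->
  (forall k, (1 <= k)%N -> FHC p (bshift (w k)) !=set0) ->
  (\bigcap_(k in [set k : nat | (1 <= k)%N]) FHC p (bshift (w k))) !=set0 ->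
  forall i j : nat, (1 <= i)%N -> (1 <= j)%N -> i <> j ->
  forall eps : R, 0 < eps < 1 ->
  exists m n : nat -> nat,
    (forall l, (0 < m l)%N /\ (0 < n l)%N) /\
    {homo m : a b / (a < b)%N} /\ {homo n : a b / (a < b)%N} /\
    (forall N : nat, exists L : nat, forall l, (L <= l)%N -> (N <= m l)%N) /\
    (forall N : nat, exists L : nat, forall l, (L <= l)%N -> (N <= n l)%N) /\
    (0 < limn_einf (fun l => ((n l)%:R / (m l)%:R : R)%:E))%E /\
    (limn_esup (fun l => ((n l)%:R / (m l)%:R : R)%:E) < eps%:E)%E /\
    cvgn (series (fun l =>
          cmod (Wprod (w i) (m l)) `^ p /
          (cmod (Wprod (w j) (m l)) `^ p *
           cmod (Wprod (w i) (m l - n l)%N) `^ p)) : R^nat).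
Proof.
move=> hp _ _ _ [x hx] i j i1 j1 ij eps /andP [eps0 eps1].
have xi : FHC p (bshift (w i)) x := hx i i1.
have xj : FHC p (bshift (w j)) x := hx j j1.
have [K [N0 gapA]] : exists K N0 : nat, forall N, (N0 <= N)%N ->
    exists2 a, UA p (iter a (bshift (w j)) x) & (N <= a < K * N)%N.
  apply: (@density_gap R [set n | UA p (iter n (bshift (w j)) x)]).
  apply: xj.2; [exact: (open_UA _ hp) | exists e0; exact: (UA_ne _ hp)].
pose dl (l : nat) : R := ((2^-1) ^+ l) `^ p^-1.
have dl0 : forall l, 0 < dl l by move=> l; apply: powR_gt0; apply: exprn_gt0; rewrite invr_gt0.
have hD : forall lb : nat * nat, exists n,
    Ud p (dl lb.1) (iter n (bshift (w i)) x) /\ (lb.2 < n)%N.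
  case=> l b /=.
  have [K' [N0' gap]] := @density_gap R [set n | Ud p (dl l) (iter n (bshift (w i)) x)]
    (xi.2 _ (open_Ud _ hp _) (ex_intro _ _ (Ud_ne _ hp _ (dl0 l)))).
  have [a ha hb] := gap (maxn N0' b.+1) (leq_maxl _ _).
  exists a; split => //; move: hb => /andP [+ _]; rewrite geq_max => /andP [_ //].
have [fD hfD] := choice hD.
have hG : forall N, exists a, (N0 <= N)%N ->
    UA p (iter a (bshift (w j)) x) /\ (N <= a < K * N)%N.
  move=> N; case: (leqP N0 N) => hN; last by exists 0%N.
  by have [a ha hb] := gapA N hN; exists a.
have [g hg] := choice hG.
pose c := (Num.trunc eps^-1).+1.
have ceps : 1 < c%:R * eps.
  rewrite -ltr_pdivrMr // mul1r -truncn_lt_nat //.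
  by rewrite invr_ge0 ltW.
have c2 : (1 < c)%N by rewrite /c ltnS truncn_gt0 invf_ge1 // ltW.
have c0 : (0 < c)%N by apply: ltn_trans c2.
pose G := fun y => (g (c * y) + N0)%N.
pose h := fun l b => fD (l, b).
pose nn := srec h G N0.
pose mm := fun l => g (c * nn l).
have nnS : forall l, nn l.+1 = fD (l.+1, G (nn l)) by [].
have nnD : forall l, Ud p (dl l) (iter (nn l) (bshift (w i)) x) /\ (N0 < nn l)%N.
  case=> [|l]; first exact: (hfD (0%N, N0)).
  have [h1 h2] := hfD (l.+1, G (nn l)); rewrite nnS; split => //.
  by apply: leq_ltn_trans h2; rewrite /G leq_addl.
have mmP : forall l, UA p (iter (mm l) (bshift (w j)) x) /\ (c * nn l <= mm l < K * (c * nn l))%N.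
  move=> l; apply: hg; apply: leq_trans (ltnW (nnD l).2) _; exact: leq_pmull.
have step_n : forall l, (mm l < nn l.+1)%N.
  move=> l; rewrite nnS; apply: leq_ltn_trans (hfD (l.+1, G (nn l))).2.
  by rewrite /G leq_addr.
have nm : forall l, (nn l < mm l)%N.
  move=> l; have /andP [h1 _] := (mmP l).2; apply: leq_trans h1.
  by apply: ltn_Pmull => //; apply: leq_ltn_trans (nnD l).2.
have incn : forall l, (nn l < nn l.+1)%N by move=> l; exact: ltn_trans (nm l) (step_n l).
have incm : forall l, (mm l < mm l.+1)%N by move=> l; exact: ltn_trans (step_n l) (nm l.+1).
have lnn : forall l, (l <= nn l)%N.
  by elim=> // l IH; apply: leq_ltn_trans IH (incn l).
have nn0 : forall l, (0 < nn l)%N by move=> l; apply: leq_ltn_trans (leq0n N0) (nnD l).2.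
have mm0 : forall l, (0 < mm l)%N by move=> l; apply: ltn_trans (nn0 l) (nm l).
have K0 : (0 < K)%N.
  have := (mmP 0%N).2 => /andP [_ /(leq_ltn_trans (leq0n _))]; rewrite muln_gt0 => /andP [] //.
exists mm, nn.
split; first by move=> l; split.
split; first exact: (homo_ltn (@ltn_trans) incm).
split; first exact: (homo_ltn (@ltn_trans) incn).
split; first by move=> N; exists N => l hl; apply: leq_trans hl (leq_trans (lnn l) (ltnW (nm l))).
split; first by move=> N; exists N => l hl; apply: leq_trans hl (lnn l).
split.
  apply: (@lt_le_trans _ _ ((K * c)%:R^-1)%:E).
    by rewrite lte_fin invr_gt0 ltr0n muln_gt0 K0 c0.
  apply: einf_ge => l; rewrite lee_fin ler_pdivlMr ?ltr0n // ler_pdivrMl ?ltr0n ?muln_gt0 ?K0 ?c0 //.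
  by rewrite -natrM ler_nat -mulnA; apply: ltnW; have /andP [_ ->] := (mmP l).2.
split.
  apply: (@le_lt_trans _ _ (c%:R^-1)%:E).
    apply: esup_le => l; rewrite lee_fin ler_pdivrMr ?ltr0n // ler_pdivlMl ?ltr0n //.
    by rewrite -natrM ler_nat; have /andP [-> _] := (mmP l).2.
  rewrite lte_fin -[c%:R^-1]mulr1 ltr_pdivrMl ?ltr0n //.
apply: (@geo_cvg R _ (2 `^ p)).
  by move=> l; apply: divr_ge0; [exact: powR_ge0 | apply: mulr_ge0; exact: powR_ge0].
move=> l; apply: le_trans (@term_bound R p hp (w i) (w j) x (mm l) (nn l) (dl l) (ltnW (nm l)) (nnD l).1 (mmP l).1) _.
rewrite /dl -powRrM mulVf ?gt_eqF ?(lt_le_trans _ hp) // powRr1 //.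
Qed.
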